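(* Let $\hat c\in\mathcal C$ satisfy the out-of-sample guarantee with speed $(a_T)$, where $(a_T)$ is any sequence of positive reals with $a_T\to\infty$. Then for all $\mathbb P\in\mathcal P^o$ and $x\in\mathcal X$, $\liminf_{T\to\infty}\big(\hat c(x,\mathbb P,T)-c(x,\mathbb P)\big)\ge0$.
   Context: Setting: $\Sigma=\{1,\dots,d\}$ ($d\ge2$) is finite; $\mathcal P\subset\mathbb R^d$ is the probability simplex over $\Sigma$ and $\mathcal P^o$ its relative interior (all entries positive). $\mathcal X\subset\mathbb R^n$ is compact and $\ell:\mathcal X\times\Sigma\to\mathbb R$ is continuous in $x$ for each $i$. For $x\in\mathcal X$, $\mu\in\mathbb R^d$ let $c(x,\mu)=\sum_{i\in\Sigma}\ell(x,i)\mu(i)$. Data $\xi_1,\xi_2,\dots$ are i.i.d. with law $\mathbb P\in\mathcal P$, $\mathbb P^\infty$ denotes their joint law, and $\hat{\mathbb P}_T(i)=\frac1T\sum_{t=1}^T\mathbf 1\{\xi_t=i\}$. A predictor is a sequence $\hat c=(\hat c(\cdot,\cdot,T))_{T\in\mathbb N}$ of functions $\mathcal X\times\mathcal P\to\mathbb R$. It is regular, written $\hat c\in\mathcal C$, if (i) the sequence $(\hat c(\cdot,\cdot,T))_T$ is uniformly bounded and equicontinuous on $\mathcal X\times\mathcal P$, and (ii) each $\hat c(x,\cdot,T)$ is differentiable in $\mathbb P$ and the sequence of derivative maps $(x,\mathbb P)\mapsto\nabla_{\mathbb P}\hat c(x,\mathbb P,T)$ is uniformly bounded and equicontinuous. (A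 sequence $(f_T)$ is equicontinuous if for every point $y$ and $\varepsilon>0$ there is a neighbourhood $U$ of $y$ with $|f_T(y)-f_T(z)|<\varepsilon$ for all $z\in U$ and all $T$.) Out-of-sample guarantee with speed $(a_T)$: for all $x\in\mathcal X$ and $\mathbb P\in\mathcal P^o$, $\limsup_{T\to\infty}\frac1{a_T}\log\mathbb P^\infty\big(c(x,\mathbb P)>\hat c(x,\hat{\mathbb P}_T,T)\big)\le-1$. *)

(* Defs.v *)
From HB Require Import structures.
From mathcomp Require Import all_boot all_order all_algebra.
From mathcomp Require Import all_classical all_reals all_analysis.
Set Implicit Arguments. Unset Strict Implicit. Unset Printing Implicit Defensive.
Import Order.TTheory GRing.Theory Num.Theory.
Import numFieldNormedType.Exports.
Local Open Scope classical_set_scope.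
Local Open Scope ring_scope.

(* Sigma = 'I_d (i.e. {0,...,d-1} in place of {1,...,d});
   a vector mu in R^d is a row vector 'rV[R]_d, mu(i) = mu 0 i. *)

Definition simplex (R : realType) (d : nat) : set 'rV[R]_d :=
  [set mu | (forall i, 0 <= mu 0 i) /\ \sum_(i < d) mu 0 i = 1].

Definition simplex_int (R : realType) (d : nat) : set 'rV[R]_d :=
  [set mu | (forall i, 0 < mu 0 i) /\ \sum_(i < d) mu 0 i = 1].

Definition cost (R : realType) (n d : nat) (l : 'rV[R]_n -> 'I_d -> R)
  (x : 'rV[R]_n) (mu : 'rV[R]_d) : R :=
  \sum_(i < d) l x i * mu 0 i.

Definition empirical (R : realType) (d T : nat) (s : {ffun 'I_T -> 'I_d}) : 'rV[R]_d :=
  \row_(i < d) (#|[set t | s t == i]|%:R / T%:R).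

(* P^oo( c(x,P) > chat(x, Phat_T, T) ): the event depends only on xi_1..xi_T,
   whose joint law is the product law P^T on Sigma^T. *)
Definition prob_shortfall (R : realType) (n d : nat)
  (l : 'rV[R]_n -> 'I_d -> R) (chat : nat -> 'rV[R]_n -> 'rV[R]_d -> R)
  (x : 'rV[R]_n) (P : 'rV[R]_d) (T : nat) : R :=
  \sum_(s : {ffun 'I_T -> 'I_d})
     (\prod_(t < T) P 0 (s t)) *
     (if chat T x (@empirical R d T s) < cost l x P then 1 else 0).

(* Regularity (chat \in C); predictors are indexed by T >= 1 and only their
   values on X x P matter. *)
Definition regular (R : realType) (n d : nat) (X : set 'rV[R]_n)
  (chat : nat -> 'rV[R]_n -> 'rV[R]_d -> R) : Prop :=
  (exists M : R, forall T x mu, (0 < T)%N -> X x -> @simplex R d mu ->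
      `|chat T x mu| <= M) /\
  (forall x mu, X x -> @simplex R d mu -> forall e : R, 0 < e ->
     exists2 delta : R, 0 < delta &
       forall T y nu, (0 < T)%N -> X y -> @simplex R d nu ->
         `|x - y| < delta -> `|mu - nu| < delta ->
         `|chat T x mu - chat T y nu| < e) /\
  (exists D : nat -> 'rV[R]_n -> 'rV[R]_d -> 'rV[R]_d,
     (forall T x mu, (0 < T)%N -> X x -> @simplex R d mu ->
        forall e : R, 0 < e -> exists2 delta : R, 0 < delta &
          forall nu, @simplex R d nu -> `|nu - mu| < delta ->
            `|chat T x nu - chat T x mu
               - \sum_(i < d) D T x mu 0 i * (nu 0 i - mu 0 i)|
              <= e * `|nu - mu|) /\
     (exists M : R, forall T x mu, (0 < T)%N -> X x -> @simplex R d mu ->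
        `|D T x mu| <= M) /\
     (forall x mu, X x -> @simplex R d mu -> forall e : R, 0 < e ->
        exists2 delta : R, 0 < delta &
          forall T y nu, (0 < T)%N -> X y -> @simplex R d nu ->
            `|x - y| < delta -> `|mu - nu| < delta ->
            `|D T x mu - D T y nu| < e)).

(* limsup_{T -> oo} (1/a_T) log p_T <= -1  (with log 0 = -oo), written out:
   for every eps > 0, eventually (1/a_T) log p_T <= -1 + eps,
   i.e. p_T <= exp(a_T (-1 + eps)) (a_T > 0). *)
Definition limsup_rate_le_m1 (R : realType) (a p : nat -> R) : Prop :=
  forall eps : R, 0 < eps ->
    \forall T \near \oo, p T <= expR (a T * (-1 + eps)).

Definition oos_guarantee (R : realType) (n d : nat) (X : set 'rV[R]_n)
  (l : 'rV[R]_n -> 'I_d -> R) (chat : nat -> 'rV[R]_n -> 'rV[R]_d -> R)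
  (a : nat -> R) : Prop :=
  forall x P, X x -> @simplex_int R d P ->
    limsup_rate_le_m1 a (prob_shortfall l chat x P).

(* Main.v *)
Require Import Defs.
From HB Require Import structures.
From mathcomp Require Import all_boot all_order all_algebra.
From mathcomp Require Import all_classical all_reals all_analysis.
From mathcomp Require Import lra ring.
Import Order.TTheory GRing.Theory Num.Theory.
Import numFieldNormedType.Exports.
Local Open Scope classical_set_scope.
Local Open Scope ring_scope.

Section Prob.
Variables (R : realType) (d T : nat) (P : 'rV[R]_d).
Hypothesis P1 : \sum_(j < d) P 0 j = 1.
Hypothesis P0 : forall j, 0 <= P 0 j.

Definition ww (s : {ffun 'I_T -> 'I_d}) := \prod_(t < T) P 0 (s t).
Definition QQ (f : {ffun 'I_T -> 'I_d} -> R) := \sum_s ww s * f s.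

Lemma ww_ge0 s : 0 <= ww s.
Proof. by apply: prodr_ge0 => t _; apply: P0. Qed.

Lemma QQext f g : (forall s, f s = g s) -> QQ f = QQ g.
Proof. by move=> H; apply: eq_bigr => s _; rewrite H. Qed.

Lemma QQle f g : (forall s, f s <= g s) -> QQ f <= QQ g.
Proof. by move=> H; apply: ler_sum => s _; apply: ler_wpM2l; [apply: ww_ge0|]. Qed.

Lemma QQD f g : QQ (fun s => f s + g s) = QQ f + QQ g.
Proof. by rewrite /QQ -big_split; apply: eq_bigr => s _; rewrite mulrDr. Qed.

Lemma QQB f g : QQ (fun s => f s - g s) = QQ f - QQ g.
Proof. by rewrite /QQ -sumrB; apply: eq_bigr => s _; rewrite mulrBr. Qed.

Lemma QQZ c f : QQ (fun s => c * f s) = c * QQ f.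
Proof. by rewrite /QQ big_distrr; apply: eq_bigr => s _; rewrite mulrCA. Qed.

Lemma QQsum (I : Type) (r : seq I) (F : I -> {ffun 'I_T -> 'I_d} -> R) :
  QQ (fun s => \sum_(k <- r) F k s) = \sum_(k <- r) QQ (F k).
Proof.
rewrite /QQ (eq_bigr (fun s => \sum_(k <- r) ww s * F k s)); last first.
  by move=> s _; rewrite big_distrr.
by rewrite exchange_big.
Qed.

Lemma QQprod (g : 'I_T -> 'I_d -> R) :
  QQ (fun s => \prod_t g t (s t)) = \prod_t \sum_j P 0 j * g t j.
Proof.
rewrite bigA_distr_bigA; apply: eq_bigr => s _.
by rewrite /ww -big_split.
Qed.

Lemma QQ1 : QQ (fun _ => 1) = 1.
Proof.
rewrite (@QQext _ (fun s => \prod_(t < T) (fun _ _ => 1 : R) t (s t))).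
  rewrite (QQprod (fun _ _ => 1)) big1 // => t _.
  by rewrite (eq_bigr (fun j => P 0 j)) // => j _; rewrite mulr1.
by move=> s; rewrite big1.
Qed.

Lemma QQe (t : 'I_T) (b : 'I_d -> R) :
  QQ (fun s => b (s t)) = \sum_j P 0 j * b j.
Proof.
rewrite (@QQext _ (fun s => \prod_u (fun u j => if u == t then b j else 1) u (s u))).
  rewrite (QQprod (fun u j => if u == t then b j else 1)) (bigD1 t) //= eqxx [X in _ * X]big1 ?mulr1 // => u /negbTE ->.
  by rewrite (eq_bigr (fun j => P 0 j)) // => j _; rewrite mulr1.
move=> s /=; rewrite (bigD1 t) //= eqxx big1 ?mulr1 // => u /negbTE ->.
by [].
Qed.

Lemma QQee (t u : 'I_T) (b c : 'I_d -> R) : t != u ->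
  QQ (fun s => b (s t) * c (s u)) = (\sum_j P 0 j * b j) * (\sum_j P 0 j * c j).
Proof.
move=> tu.
pose g := fun v j => if v == t then b j else if v == u then c j else 1.
have Hpr : forall (F : 'I_T -> R), \prod_v F v = F t * F u * \prod_(v | (v != t) && (v != u)) F v.
  move=> F; rewrite (bigD1 t) //= (bigD1 u) /=; last by rewrite eq_sym.
  by rewrite mulrA; congr (_ * _); apply: eq_bigl => v; rewrite andbC.
rewrite (@QQext _ (fun s => \prod_v g v (s v))).
  have ut : u != t by rewrite eq_sym.
  rewrite (QQprod g) Hpr /g eqxx (negbTE ut) eqxx.
  rewrite [X in _ * X]big1 ?mulr1 //.
  move=> v /andP[/negbTE -> /negbTE ->].
  by rewrite (eq_bigr (fun j => P 0 j)) // => j _; rewrite mulr1.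
move=> s; rewrite Hpr /g eqxx.
rewrite ifN; last by rewrite eq_sym.
rewrite eqxx big1 ?mulr1 // => v /andP[/negbTE -> /negbTE ->] //.
Qed.

Lemma QQvar (c : 'I_d -> R) : \sum_j P 0 j * c j = 0 ->
  QQ (fun s => (\sum_(t < T) c (s t)) ^+ 2) = T%:R * \sum_j P 0 j * (c j * c j).
Proof.
move=> c0.
rewrite (@QQext _ (fun s => \sum_(t < T) \sum_(u < T) c (s t) * c (s u))); last first.
  by move=> s; rewrite expr2 big_distrl; apply: eq_bigr => t _; rewrite big_distrr.
rewrite QQsum (eq_bigr (fun _ => \sum_j P 0 j * (c j * c j))).
  by rewrite sumr_const card_ord mulr_natl.
move=> t _; rewrite QQsum (bigD1 t) //= big1 ?addr0.
  exact: (QQe t (fun j => c j * c j)).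
by move=> u ut; rewrite QQee ?c0 ?mul0r // eq_sym.
Qed.


Definition bb (i j : 'I_d) : R := ((j == i)%:R).

Lemma emp_entry (s : {ffun 'I_T -> 'I_d}) i :
  (@empirical R d T s) 0 i = (\sum_(t < T) bb i (s t)) / T%:R.
Proof.
rewrite mxE; congr (_ / _).
rewrite -sum1_card natr_sum big_mkcond /=.
apply: eq_bigr => t _; rewrite /bb /in_set unfold_in /= asboolb.
by case: (s t == i).
Qed.

Lemma sum_bb (j : 'I_d) : \sum_(i < d) bb i j = 1.
Proof.
rewrite (bigD1 j) //= /bb eqxx big1 ?addr0 // => i ij.
by rewrite eq_sym (negbTE ij).
Qed.

Lemma sumP_bb (i : 'I_d) : \sum_(j < d) P 0 j * bb i j = P 0 i.
Proof.
rewrite (bigD1 i) //= /bb eqxx mulr1 big1 ?addr0 // => j ji.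
by rewrite (negbTE ji) mulr0.
Qed.

Lemma emp_simplex (s : {ffun 'I_T -> 'I_d}) : (0 < T)%N -> simplex (@empirical R d T s).
Proof.
move=> T0; split.
  move=> i; rewrite emp_entry; apply: divr_ge0; last by rewrite ler0n.
  by apply: sumr_ge0 => t _; rewrite /bb ler0n.
rewrite (eq_bigr (fun i => (\sum_(t < T) bb i (s t)) / T%:R)); last by move=> i _; rewrite emp_entry.
rewrite -big_distrl /= exchange_big /= (eq_bigr (fun _ => 1)); last by move=> t _; rewrite sum_bb.
by rewrite sumr_const card_ord divff // pnatr_eq0 -lt0n.
Qed.

Lemma P_le1 i : P 0 i <= 1.
Proof.
rewrite -P1 (bigD1 i) //= lerDl; by apply: sumr_ge0 => j _.
Qed.

Lemma entry_le_norm (M : 'rV[R]_d) i : `|M 0 i| <= `|M|.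
Proof.
rewrite [leRHS]/Num.Def.normr /= mx_normrE.
by apply: le_trans; last exact: (le_bigmax _ _ (0, i)).
Qed.

Lemma norm_lt (M : 'rV[R]_d) (e : R) : 0 < e -> (forall i, `|M 0 i| < e) -> `|M| < e.
Proof.
move=> e0 H; rewrite /Num.Def.normr /= mx_normrE.
apply: bigmax_lt => // -[i j] _ /=.
by rewrite (ord1 i).
Qed.

Lemma bad_bound (s : {ffun 'I_T -> 'I_d}) (e : R) : (0 < T)%N -> 0 < e ->
  1 - (if `|@empirical R d T s - P| < e then 1 else 0) <=
  \sum_(i < d) (\sum_(t < T) (bb i (s t) - P 0 i)) ^+ 2 / (T%:R * e) ^+ 2.
Proof.
move=> T0 e0.
have Hge : forall i, 0 <= (\sum_(t < T) (bb i (s t) - P 0 i)) ^+ 2 / (T%:R * e) ^+ 2.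
  by move=> i; apply: divr_ge0; apply: sqr_ge0.
case: ifP => Hn.
  by rewrite subrr; apply: sumr_ge0 => i _.
rewrite subr0.
have [i Hi] : exists i, e <= `|@empirical R d T s 0 i - P 0 i|.
  apply: contrapT => Hne; move: Hn; rewrite norm_lt // => i.
  rewrite mxE [(- P) 0 i]mxE; case: (ltP (`|@empirical R d T s 0 i - P 0 i|) e) => // Hle.
  by exfalso; apply: Hne; exists i.
rewrite (bigD1 i) //=.
suff H1 : 1 <= (\sum_(t < T) (bb i (s t) - P 0 i)) ^+ 2 / (T%:R * e) ^+ 2.
  apply: le_trans H1 _; rewrite lerDl; exact: sumr_ge0.
have Tp : 0 < (T%:R : R) by rewrite ltr0n.
have -> : \sum_(t < T) (bb i (s t) - P 0 i) = T%:R * (@empirical R d T s 0 i - P 0 i).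
  rewrite emp_entry sumrB sumr_const card_ord mulrBr mulrCA divff ?mulr1 ?mulr_natl //.
  by rewrite gt_eqF.
rewrite ler_pdivlMr; last by rewrite exprn_gt0 // mulr_gt0.
rewrite mul1r exprMn [X in _ <= X]exprMn ler_wpM2l //.
rewrite -(real_normK (num_real (@empirical R d T s 0 i - P 0 i))) !expr2.
by apply: ler_pM => //; apply: ltW.
Qed.

Lemma good_prob (e : R) : (0 < T)%N -> 0 < e ->
  1 - d%:R / (T%:R * e ^+ 2) <=
  QQ (fun s => if `|@empirical R d T s - P| < e then 1 else 0).
Proof.
move=> T0 e0.
have Tp : 0 < (T%:R : R) by rewrite ltr0n.
set ind := (fun s => _).
have H := @QQle _ _ (fun s => bad_bound s e T0 e0).
rewrite QQB QQ1 QQsum in H.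
rewrite lerBlDr addrC -lerBlDr; apply: le_trans H _.
have -> : d%:R / (T%:R * e ^+ 2) = \sum_(i < d) (T%:R / (T%:R * e) ^+ 2).
  rewrite sumr_const card_ord -mulr_natl; field.
  by apply/andP; split; rewrite gt_eqF // exprn_gt0.
apply: ler_sum => i _.
rewrite (@QQext _ (fun s => ((T%:R * e) ^+ 2)^-1 * (\sum_(t < T) (bb i (s t) - P 0 i)) ^+ 2)); last first.
  by move=> s; rewrite mulrC.
rewrite QQZ (@QQvar (fun j => bb i j - P 0 i)); last first.
  rewrite (eq_bigr (fun j => P 0 j * bb i j - P 0 j * P 0 i)); last by move=> j _; rewrite mulrBr.
  by rewrite sumrB sumP_bb -big_distrl /= P1 mul1r subrr.
rewrite [leRHS]mulrC; apply: ler_wpM2l.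
  by rewrite invr_ge0 exprn_ge0 // mulr_ge0 // ltW.
rewrite -[leRHS]mulr1; apply: ler_wpM2l; first exact: ltW.
rewrite -P1; apply: ler_sum => j _.
rewrite -[X in _ <= X]mulr1 ler_wpM2l //.
have := P_le1 i; have := P0 i; rewrite /bb; case: (j == i) => /= h1 h2; nra.
Qed.
End Prob.

Theorem mainTheorem10 (R : realType) (n d : nat) (hd : (2 <= d)%N)
  (X : set 'rV[R]_n) (hX : compact X)
  (l : 'rV[R]_n -> 'I_d -> R)
  (hl : forall i : 'I_d, {within X, continuous (fun x => l x i)})
  (chat : nat -> 'rV[R]_n -> 'rV[R]_d -> R) (hreg : regular X chat)
  (a : nat -> R) (ha_pos : forall T, (0 < T)%N -> 0 < a T)
  (ha_inf : a @ \oo --> +oo)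
  (hoos : oos_guarantee X l chat a) :
  forall P x, @simplex_int R d P -> X x ->
    (* liminf_{T -> oo} (chat(x,P,T) - c(x,P)) >= 0, written out *)
    forall eps : R, 0 < eps ->
      \forall T \near \oo, - eps <= chat T x P - cost l x P.
Proof.
move=> P x hP hx eps eps0.
have hPs : simplex P by case: hP => h1 h2; split => // i; apply: ltW.
case: (hPs) => P0 P1.
case: hreg => _ [hequi _].
have [δ δ0 Hδ] := hequi x P hx hPs eps eps0.
have h2p : (0 : R) < 1 / 2 by [].
have H1 := hoos x P hx hP (1/2) h2p.
have H2 : \forall T \near \oo, 4 <= a T by move/cvgryPge: ha_inf; apply.
have H3 : \forall T \near \oo, 4 * d%:R / δ ^+ 2 <= (T%:R : R).
  by have := @cvgr_idn R; move/cvgryPge; apply.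
apply: filterS3 H1 H2 H3 => T h1 h2 h3.
have dp : (0 : R) < d%:R by rewrite ltr0n; apply: leq_trans hd.
have δ2 : (0 : R) < δ ^+ 2 by rewrite exprn_gt0.
have Tp : (0 : R) < T%:R.
  by apply: lt_le_trans h3; rewrite divr_gt0 // mulr_gt0.
have T0 : (0 < T)%N by rewrite -(ltr0n R).
case: (leP (- eps) (chat T x P - cost l x P)) => // Hlt; exfalso.
have Hg := @good_prob R d T P P1 P0 δ T0 δ0.
have Hle : QQ R d T P (fun s => if `|@empirical R d T s - P| < δ then 1 else 0)
   <= prob_shortfall l chat x P T.
  apply: QQle => // s.
  case: ifP => hs; last by case: ifP.
  have := Hδ T x (@empirical R d T s) T0 hx (@emp_simplex R d T s T0).
  rewrite subrr normr0 distrC => /(_ δ0 hs) hc.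
  have := ler_norm (chat T x (@empirical R d T s) - chat T x P).
  rewrite distrC => hn.
  have -> : chat T x (@empirical R d T s) < cost l x P.
    by have := le_lt_trans hn hc; lra.
  by [].
have Hq : d%:R / (T%:R * δ ^+ 2) <= 1 / 4.
  rewrite ler_pdivrMr; last by rewrite mulr_gt0.
  move: h3; rewrite ler_pdivrMr // => h3; lra.
have He : expR (a T * (-1 + 1 / 2)) <= 1 / 3.
  have E2 := expR_ge1Dx (2 : R).
  apply: le_trans (_ : expR (- 2) <= _).
    by rewrite ler_expR; lra.
  rewrite expRN -div1r ler_pdivrMr ?expR_gt0 //; lra.
have := le_trans Hg (le_trans Hle h1).
move=> hh.
have := le_trans hh He; lra.
Qed.
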